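(* Let $L$ be a co-Heyting algebra and $X\subseteq L$ a subset which is compact for the codimetric topology. Then every monotonic (increasing or decreasing) sequence of elements of $X$ is convergent for the codimetric pseudometric.
   Context: A co-Heyting algebra is a bounded distributive lattice $(L,0,1,\vee,\wedge)$ such that $a-b=\min\{c\in L: a\le b\vee c\}$ exists for all $a,b$. Let $a\triangle b=(a-b)\vee(b-a)$. $\operatorname{Spec}L$ is the set of prime filters ordered by inclusion; height = foundation rank there; $\operatorname{codim}_La=\min\{\operatorname{height}\mathfrak p: a\in\mathfrak p\}$ ($+\infty$ if none). The codimetric pseudometric is $\operatorname{dist}_L(a,b)=2^{-\operatorname{codim}_L(a\triangle b)}$ if finite and $0$ otherwise; the codimetric topology is the topology it defines. *)

(* Defs.v *)
From mathcomp Require Import all_boot all_order.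
From Stdlib Require Import Reals ClassicalEpsilon.

Set Implicit Arguments.
Unset Strict Implicit.
Unset Printing Implicit Defensive.

Import Order.TTheory.
Local Open Scope order_scope.

Definition coHeyting_diff (d : Order.disp_t) (L : tbDistrLatticeType d)
  (sub : L -> L -> L) : Prop :=
  forall a b : L, a <= Order.join b (sub a b) /\
    (forall c : L, a <= Order.join b c -> sub a b <= c).

Definition symdiff (d : Order.disp_t) (L : tbDistrLatticeType d)
  (sub : L -> L -> L) (a b : L) : L := Order.join (sub a b) (sub b a).

Definition prime_filter (d : Order.disp_t) (L : tbDistrLatticeType d)
  (F : L -> Prop) : Prop :=
  [/\ F \top, ~ F \bot,
      (forall a b : L, F a -> a <= b -> F b),
      (forall a b : L, F a -> F b -> F (Order.meet a b)) &
      (forall a b : L, F (Order.join a b) -> F a \/ F b)].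

Definition strict_incl (T : Type) (q p : T -> Prop) : Prop :=
  (forall x, q x -> p x) /\ exists x, p x /\ ~ q x.

(* height_le n p : the foundation rank (height) of the prime filter p in
   Spec L (ordered by inclusion) is a finite ordinal <= n.
   height p = sup { height q + 1 | q prime, q strictly included in p }. *)
Fixpoint height_le (d : Order.disp_t) (L : tbDistrLatticeType d)
  (n : nat) (p : L -> Prop) : Prop :=
  match n with
  | 0 => forall q : L -> Prop, prime_filter q -> ~ strict_incl q p
  | n'.+1 => forall q : L -> Prop, prime_filter q -> strict_incl q p ->
             height_le n' q
  end.

Definition codim_le (d : Order.disp_t) (L : tbDistrLatticeType d)
  (a : L) (n : nat) : Prop :=
  exists p : L -> Prop, [/\ prime_filter p, p a & height_le n p].

Definition codim_leb (d : Order.disp_t) (L : tbDistrLatticeType d)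
  (a : L) (n : nat) : bool :=
  if excluded_middle_informative (codim_le a n) then true else false.

(* codim_L a : Some n if it is the finite number n, None otherwise
   (+infinity, or an infinite ordinal). *)
Definition codim (d : Order.disp_t) (L : tbDistrLatticeType d)
  (a : L) : option nat :=
  match excluded_middle_informative (exists n, codim_leb a n) with
  | left H => Some (ex_minn H)
  | right _ => None
  end.

Definition cdist (d : Order.disp_t) (L : tbDistrLatticeType d)
  (sub : L -> L -> L) (a b : L) : R :=
  match codim (symdiff sub a b) with
  | Some n => ((/ 2) ^ n)%R
  | None => 0%R
  end.

Definition cd_open (d : Order.disp_t) (L : tbDistrLatticeType d)
  (sub : L -> L -> L) (U : L -> Prop) : Prop :=
  forall x, U x -> exists e : R, (0 < e)%R /\
    forall y, (cdist sub x y < e)%R -> U y.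

Definition cd_compact (d : Order.disp_t) (L : tbDistrLatticeType d)
  (sub : L -> L -> L) (X : L -> Prop) : Prop :=
  forall C : (L -> Prop) -> Prop,
    (forall U, C U -> cd_open sub U) ->
    (forall x, X x -> exists U, C U /\ U x) ->
    exists s : seq (L -> Prop),
      (forall U, List.In U s -> C U) /\
      (forall x, X x -> exists U, List.In U s /\ U x).

Definition cd_convergent (d : Order.disp_t) (L : tbDistrLatticeType d)
  (sub : L -> L -> L) (u : nat -> L) : Prop :=
  exists l : L, forall e : R, (0 < e)%R ->
    exists N : nat, forall k : nat, leq N k -> (cdist sub (u k) l < e)%R.

Definition increasing_seq (d : Order.disp_t) (L : tbDistrLatticeType d)
  (u : nat -> L) : Prop := forall m n : nat, leq m n -> u m <= u n.

Definition decreasing_seq (d : Order.disp_t) (L : tbDistrLatticeType d)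
  (u : nat -> L) : Prop := forall m n : nat, leq m n -> u n <= u m.

(* Main.v *)
Require Import Defs.
From mathcomp Require Import all_boot all_order.
From Stdlib Require Import Reals.
From Stdlib Require Import Lra Lia Classical ClassicalEpsilon.

Import Order.TTheory.

Section Aux.
Variables (d : Order.disp_t) (L : tbDistrLatticeType d) (sub : L -> L -> L).
Hypothesis Hsub : coHeyting_diff sub.

Definition small (z : L) (N : nat) : Prop :=
  forall n, leq n N -> ~ codim_le z n.

Definition cd (z : L) : R :=
  match codim z with Some n => ((/ 2) ^ n)%R | None => 0%R end.

Lemma cdistE a b : cdist sub a b = cd (symdiff sub a b).
Proof. by []. Qed.

Lemma pow_half_lt m n : leq m.+1 n -> ((/ 2) ^ n < (/ 2) ^ m)%R.
Proof.
move=> H; rewrite !pow_inv; apply Rinv_lt_contravar.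
  apply Rmult_lt_0_compat; apply pow_lt; lra.
apply Rlt_pow; first lra. move/ssrnat.leP: H; lia.
Qed.

Lemma pow_half_le m n : leq m n -> ((/ 2) ^ n <= (/ 2) ^ m)%R.
Proof.
rewrite leq_eqVlt => /orP [/eqP -> | H]; first lra.
by apply Rlt_le, pow_half_lt.
Qed.

Lemma codim_lebP (z : L) n : codim_leb z n <-> codim_le z n.
Proof.
rewrite /codim_leb; case: excluded_middle_informative => //; split => //.
Qed.

Lemma small_cd z N : small z N <-> (cd z < (/ 2) ^ N)%R.
Proof.
rewrite /cd /codim; case: excluded_middle_informative => [H|H].
  case: ex_minnP => m Hm Hmin; split.
    move=> Hs; case: (leqP m N) => HmN.
      by exfalso; apply: (Hs m HmN); apply/codim_lebP.
    by apply pow_half_lt.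
  move=> Hlt n HnN Hc.
  have Hmn : leq m n by apply: Hmin; apply/codim_lebP.
  have := @pow_half_le _ _ (leq_trans Hmn HnN); lra.
split=> _; first by apply pow_lt; lra.
move=> n _ Hc; apply: H; exists n; by apply/codim_lebP.
Qed.

Lemma small_le x y z N : (x <= Order.join y z)%O -> small y N -> small z N ->
  small x N.
Proof.
move=> Hle Hy Hz n HnN [p [[Ht Hb Hup Hmeet Hjoin] Hpx Hh]].
case: (Hjoin y z (Hup _ _ Hpx Hle)) => Hp.
  by apply: (Hy n HnN); exists p; split.
by apply: (Hz n HnN); exists p; split.
Qed.

Lemma small_bot x N : (x <= \bot)%O -> small x N.
Proof.
move=> Hle n _ [p [[Ht Hb Hup _ _] Hpx _]]; apply: Hb; exact: Hup _ _ Hpx Hle.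
Qed.

Lemma sub_mono_l a b c : (a <= b)%O -> (sub a c <= sub b c)%O.
Proof.
move=> Hab; apply (proj2 (Hsub a c)); apply: le_trans Hab _; exact: (proj1 (Hsub b c)).
Qed.

Lemma sub_anti_r a b c : (b <= c)%O -> (sub a c <= sub a b)%O.
Proof.
move=> Hbc; apply (proj2 (Hsub a c)); apply: le_trans (proj1 (Hsub a b)) _.
by apply: leU2.
Qed.

Lemma sub_tri x y z : (sub x z <= Order.join (sub x y) (sub y z))%O.
Proof.
apply (proj2 (Hsub x z)); apply: le_trans (proj1 (Hsub x y)) _.
rewrite leUx; apply/andP; split.
  apply: le_trans (proj1 (Hsub y z)) _.
  rewrite leUx; apply/andP; split; first exact: leUl.
  by apply: le_trans (leUr _ _) (leUr _ _).
by apply: le_trans (leUl _ _) (leUr _ _).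
Qed.

Lemma sub_self x : (sub x x <= \bot)%O.
Proof. apply (proj2 (Hsub x x)); exact: leUl. Qed.

Lemma symdiffC a b : symdiff sub a b = symdiff sub b a.
Proof. by rewrite /symdiff joinC. Qed.

Lemma small_self x N : small (symdiff sub x x) N.
Proof. apply small_bot; rewrite /symdiff leUx sub_self; done. Qed.

Lemma small_tri x y z N : small (symdiff sub x y) N -> small (symdiff sub y z) N ->
  small (symdiff sub x z) N.
Proof.
move=> H1 H2; apply: (@small_le _ _ _ _ _ H1 H2).
rewrite /symdiff leUx; apply/andP; split.
  apply: le_trans (sub_tri x y z) _; apply: leU2; exact: leUl.
apply: le_trans (sub_tri z y x) _; rewrite joinC; apply: leU2; exact: leUr.
Qed.

Lemma small_between a m b l N : (a <= m)%O -> (m <= b)%O ->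
  small (symdiff sub a l) N -> small (symdiff sub b l) N ->
  small (symdiff sub m l) N.
Proof.
move=> Ham Hmb Ha Hb; apply: (@small_le _ _ _ _ _ Hb Ha).
rewrite /symdiff leUx; apply/andP; split.
  apply: le_trans (@sub_mono_l _ _ l Hmb) _; apply: le_trans (leUl _ _) (leUl _ _).
apply: le_trans (@sub_anti_r l _ _ Ham) _; apply: le_trans (leUr _ _) (leUr _ _).
Qed.

Definition cluster (u : nat -> L) (l : L) : Prop :=
  forall N K, exists k, leq K k /\ small (symdiff sub (u k) l) N.

Lemma cluster_conv u l : (increasing_seq u \/ decreasing_seq u) ->
  cluster u l -> cd_convergent sub u.
Proof.
move=> Hmon Hcl; exists l => e He.
have [N HN] : exists N, ((/ 2) ^ N < e)%R.
  have [N HN] := pow_lt_1_zero (/ 2) ltac:(rewrite Rabs_pos_eq; lra) e He.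
  exists N; have := HN N (le_n N).
  rewrite Rabs_pos_eq //; apply pow_le; lra.
have [k0 [_ Hk0]] := Hcl N 0.
exists k0 => m Hm.
have [k1 [Hk1 Hs1]] := Hcl N m.
have Hsm : small (symdiff sub (u m) l) N.
  case: Hmon => Hmon.
    exact: (@small_between _ _ _ _ _ (Hmon _ _ Hm) (Hmon _ _ Hk1) Hk0 Hs1).
  exact: (@small_between _ _ _ _ _ (Hmon _ _ Hk1) (Hmon _ _ Hm) Hs1 Hk0).
rewrite cdistE; have := proj1 (small_cd _ _) Hsm; lra.
Qed.

Definition ball (l : L) (N : nat) : L -> Prop :=
  fun y => small (symdiff sub l y) N.

Lemma ball_open l N : cd_open sub (ball l N).
Proof.
move=> y Hy; exists ((/ 2) ^ N)%R; split; first by apply pow_lt; lra.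
move=> z Hz; rewrite cdistE in Hz; move/(small_cd _ _): Hz => Hz.
exact: small_tri Hy Hz.
Qed.

End Aux.
Arguments small {d L}.
Arguments cluster {d L}.
Arguments ball {d L}.
Arguments cluster_conv {d L sub} Hsub {u l}.
Arguments ball_open {d L sub} Hsub l N.
Arguments small_self {d L sub} Hsub x N.
Arguments symdiffC {d L} sub a b.

Theorem corollary7p7 (d : Order.disp_t) (L : tbDistrLatticeType d)
  (sub : L -> L -> L) (Hsub : coHeyting_diff sub) (X : L -> Prop) :
  cd_compact sub X ->
  forall u : nat -> L, (forall n, X (u n)) ->
  (increasing_seq u \/ decreasing_seq u) ->
  cd_convergent sub u.
Proof.
move=> Hcomp u HX Hmon.
case: (classic (exists l, cluster sub u l)) => [[l Hl]|Hno].
  exact: (cluster_conv Hsub Hmon Hl).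
have Hnc : forall l, exists N K, forall k, leq K k ->
    ~ small (symdiff sub (u k) l) N.
  move=> l; apply: NNPP => H; apply: Hno; exists l => N K.
  apply: NNPP => H2; apply: H; exists N, K => k Hk Hs; apply: H2.
  by exists k.
pose C := fun U : L -> Prop => exists l N K, U = ball sub l N /\
  forall k, leq K k -> ~ small (symdiff sub (u k) l) N.
have HC1 : forall U, C U -> cd_open sub U.
  move=> U [l [N [K [-> _]]]]; exact: (ball_open Hsub l N).
have HC2 : forall x, X x -> exists U, C U /\ U x.
  move=> x _; have [N [K HK]] := Hnc x.
  exists (ball sub x N); split; first by exists x, N, K.
  exact: (small_self Hsub x N).
have [s [Hs1 Hs2]] := Hcomp C HC1 HC2.
have [Km HKm] : exists Km, forall U, List.In U s -> exists l N K,
      [/\ U = ball sub l N, leq K Km &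
       forall k, leq K k -> ~ small (symdiff sub (u k) l) N].
    elim: s Hs1 {Hs2} => [|U s IH] Hs.
      by exists 0.
    have [Km HKm] := IH (fun V HV => Hs V (or_intror HV)).
    have [l [N [K [HU HK]]]] := Hs U (or_introl erefl).
    exists (maxn K Km) => V [<-|HV].
      by exists l, N, K; split => //; rewrite leq_maxl.
    have [l' [N' [K' [HU' HK' HK'']]]] := HKm V HV.
    exists l', N', K'; split => //; apply: leq_trans HK' _; exact: leq_maxr.
  have [U [HUs HUx]] := Hs2 _ (HX Km).
  have [l [N [K [HU HK HKk]]]] := HKm U HUs.
  apply: False_ind; apply: (HKk Km HK).
  by rewrite symdiffC; rewrite HU in HUx.
Qed.
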